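(* For every $\varepsilon>0$ there exists $p_0>0$ such that for every $p<p_0$, $$\mathbb{P}_p\big([0,p^{-5}]^2\text{ is internally filled}\big)\ge \exp\left[-\left(\frac16+\varepsilon\right)\frac1p\left(\log\frac1p\right)^2\right].$$
   Context: Let $\mathcal{N}=\{(2,0),(1,0),(0,1),(-1,0),(-2,0),(0,-1)\}$. For $A\subset\mathbb{Z}^2$, $\langle A\rangle$ denotes the final set obtained from $A$ by repeatedly adding any site $z$ such that $z+\mathcal{N}$ contains at least three sites of the current set. Under $\mathbb{P}_p$, each site of $\mathbb{Z}^2$ belongs to the random set $K$ independently with probability $p$. $[0,p^{-5}]^2$ denotes the set of sites of $\mathbb{Z}^2$ in that Euclidean square. A set $S$ is internally filled if $S\subset\langle K\cap S\rangle$. *)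

(* Defs.v *)
From Stdlib Require Import Reals ZArith List Lra ClassicalEpsilon.
Import ListNotations.
Open Scope R_scope.

Definition site : Type := (Z * Z)%type.

Definition site_add (z u : site) : site := ((fst z + fst u)%Z, (snd z + snd u)%Z).

Definition nbhd : list site :=
  [(2,0)%Z; (1,0)%Z; (0,1)%Z; ((-1),0)%Z; ((-2),0)%Z; (0,(-1))%Z].

Inductive closure (A : site -> Prop) : site -> Prop :=
  | cl_base : forall z, A z -> closure A z
  | cl_step : forall z u v w,
      In u nbhd -> In v nbhd -> In w nbhd ->
      u <> v -> u <> w -> v <> w ->
      closure A (site_add z u) -> closure A (site_add z v) ->
      closure A (site_add z w) -> closure A z.

Definition internally_filled (K S : site -> Prop) : Prop :=
  forall z, S z -> closure (fun w => K w /\ S w) z.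

Definition in_box (p : R) (z : site) : Prop :=
  0 <= IZR (fst z) <= / p ^ 5 /\ 0 <= IZR (snd z) <= / p ^ 5.

(* Explicit enumeration (without repetition) of the same finite set, for
   0 < p: coordinates 0 .. floor(p^-5)  (Int_part = floor). *)
Definition box_list (p : R) : list site :=
  let N := Z.to_nat (Int_part (/ p ^ 5)) in
  let c := map Z.of_nat (seq 0 (S N)) in
  list_prod c c.

Definition indicator (P : Prop) : R :=
  if excluded_middle_informative P then 1 else 0.

(* Probability, under product Bernoulli(p) measure on the sites of the
   finite list L, of an event E about the random set K ∩ L.
   [acc] collects the sites already declared occupied. *)
Fixpoint config_prob (p : R) (E : (site -> Prop) -> Prop)
    (L acc : list site) : R :=
  match L with
  | [] => indicator (E (fun z => In z acc))
  | z :: L' => p * config_prob p E L' (z :: acc)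
               + (1 - p) * config_prob p E L' acc
  end.

(* P_p([0,p^-5]^2 is internally filled).  The event only depends on
   K ∩ [0,p^-5]^2, so it is computed exactly from the marginal of the
   product measure on the box. *)
Definition prob_box_filled (p : R) : R :=
  config_prob p (fun K => internally_filled K (in_box p)) (box_list p) [].

(* Main.v *)
Require Import Defs.
From Stdlib Require Import Reals Lra Lia List Permutation ZArith ClassicalEpsilon FinFun.
Import ListNotations.
Open Scope R_scope.

Open Scope R_scope.

Lemma closure_mono : forall (A A' : site -> Prop), (forall z, A z -> A' z) ->
  forall z, closure A z -> closure A' z.
Proof.
  intros A A' H z Hz. induction Hz.
  - apply cl_base; auto.
  - apply (cl_step A' z u v w); auto.
Qed.

Definition Emono (E : (site -> Prop) -> Prop) :=
  forall K K' : site -> Prop, (forall z, K z -> K' z) -> E K -> E K'.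

Lemma cp_cons : forall p E z L acc,
  config_prob p E (z :: L) acc = p * config_prob p E L (z :: acc) + (1 - p) * config_prob p E L acc.
Proof. reflexivity. Qed.

Lemma cp_bounds : forall p E L acc, 0 <= p <= 1 ->
  0 <= config_prob p E L acc <= 1.
Proof.
  intros p E L. induction L as [|z L IH]; intros acc Hp; simpl.
  - unfold indicator. destruct (excluded_middle_informative _); lra.
  - destruct (IH (z :: acc) Hp), (IH acc Hp). nra.
Qed.

Lemma cp_mono : forall p E, 0 <= p <= 1 -> Emono E -> forall L acc acc',
  (forall z, In z acc -> In z acc') ->
  config_prob p E L acc <= config_prob p E L acc'.
Proof.
  intros p E Hp HE L. induction L as [|z L IH]; intros acc acc' Hs; simpl.
  - unfold indicator. destruct (excluded_middle_informative _) as [h|h];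
    destruct (excluded_middle_informative _) as [h'|h']; try lra.
    exfalso. apply h'. eapply HE; [|exact h]. simpl. auto.
  - assert (H1 : config_prob p E L (z :: acc) <= config_prob p E L (z :: acc')).
    { apply IH. intros w [->|Hw]; simpl; auto. }
    assert (H2 := IH acc acc' Hs). nra.
Qed.

Lemma cp_ext : forall p E, 0 <= p <= 1 -> Emono E -> forall L acc acc',
  (forall z, In z acc <-> In z acc') ->
  config_prob p E L acc = config_prob p E L acc'.
Proof.
  intros. apply Rle_antisym; apply cp_mono; auto; intros; apply H1; auto.
Qed.

Lemma cp_perm : forall p E, 0 <= p <= 1 -> Emono E -> forall L L',
  Permutation L L' -> forall acc, config_prob p E L acc = config_prob p E L' acc.
Proof.
  intros p E Hp HE L L' HP. induction HP; intros acc.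
  - reflexivity.
  - simpl. rewrite IHHP, IHHP. reflexivity.
  - simpl. rewrite (cp_ext p E Hp HE l (y :: x :: acc) (x :: y :: acc)).
    + ring.
    + intros z; simpl; tauto.
  - rewrite IHHP1. apply IHHP2.
Qed.

Lemma cp_one : forall p E, 0 <= p <= 1 -> Emono E -> forall L acc,
  E (fun z => In z acc) -> config_prob p E L acc = 1.
Proof.
  intros p E Hp HE L. induction L as [|z L IH]; intros acc H; simpl.
  - unfold indicator. destruct (excluded_middle_informative _); tauto.
  - rewrite (IH acc H). rewrite IH. ring.
    eapply HE; [|exact H]. simpl; auto.
Qed.

Lemma extract : forall (s : site) L, In s L -> NoDup L ->
  exists L0, Permutation L (s :: L0) /\ NoDup L0 /\
    (forall z, In z L -> z <> s -> In z L0) /\ (forall z, In z L0 -> In z L /\ z <> s).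
Proof.
  intros s L Hin Hnd. destruct (in_split _ _ Hin) as [l1 [l2 ->]].
  exists (l1 ++ l2). split; [|split; [|split]].
  - apply Permutation_sym, Permutation_middle.
  - eapply NoDup_remove_1; eauto.
  - intros z Hz Hne. apply in_app_or in Hz. apply in_or_app. simpl in Hz.
    destruct Hz as [|[|]]; auto; congruence.
  - intros w Hz. split.
    + apply in_or_app. apply in_app_or in Hz. simpl. tauto.
    + intros ->. apply NoDup_remove_2 in Hnd. auto.
Qed.

Lemma cp_drop : forall p E, 0 <= p <= 1 -> Emono E -> forall s L acc,
  In s L -> NoDup L -> exists L0, NoDup L0 /\
    (forall z, In z L -> z <> s -> In z L0) /\ (forall z, In z L0 -> In z L /\ z <> s) /\
    config_prob p E L0 acc <= config_prob p E L acc.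
Proof.
  intros p E Hp HE s L acc Hin Hnd.
  destruct (extract s L Hin Hnd) as [L0 [HP [Hn [H1 H2]]]].
  exists L0. repeat split; auto; try (apply H2; auto).
  rewrite (cp_perm p E Hp HE _ _ HP). simpl.
  pose proof (cp_mono p E Hp HE L0 acc (s :: acc) ltac:(simpl; auto)). nra.
Qed.

(* reveal a sequence of sites; success as soon as one is occupied *)
Lemma reveal_seq : forall p E, 0 <= p <= 1 -> Emono E -> forall S L acc X Y,
  NoDup L -> NoDup S -> incl S L ->
  (forall S1 s S2, S = S1 ++ s :: S2 -> forall L' acc', NoDup L' ->
     (forall z, In z L -> ~ In z (S1 ++ [s]) -> In z L') ->
     (forall z, In z acc -> In z acc') -> In s acc' -> X <= config_prob p E L' acc') ->
  (forall L', NoDup L' -> (forall z, In z L -> ~ In z S -> In z L') -> Y <= config_prob p E L' acc) ->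
  (1 - (1 - p) ^ length S) * X + (1 - p) ^ length S * Y <= config_prob p E L acc.
Proof.
  intros p E Hp HE S. induction S as [|s S IH]; intros L acc X Y HL HS Hinc Hsucc Hfail.
  - simpl. replace ((1 - 1) * X + 1 * Y) with Y by ring. apply Hfail; auto.
  - destruct (extract s L (Hinc s (or_introl eq_refl)) HL) as [L0 [HP [Hn [H1 H2]]]].
    rewrite (cp_perm p E Hp HE _ _ HP). simpl.
    inversion HS as [|? ? Hns HS']; subst.
    assert (HA : X <= config_prob p E L0 (s :: acc)).
    { apply (Hsucc [] s S eq_refl); auto.
      - intros z Hz Hz'. apply H1; auto. intros ->. apply Hz'. simpl; auto.
      - simpl; auto.
      - simpl; auto. }
    assert (HB : (1 - (1 - p) ^ length S) * X + (1 - p) ^ length S * Y <= config_prob p E L0 acc).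
    { apply IH; auto.
      - intros z Hz. apply H1. apply Hinc. simpl; auto. intros ->. auto.
      - intros S1 s' S2 HeqS L' acc' HL' Hc Hacc Hs'. apply (Hsucc (s :: S1) s' S2); auto.
        + rewrite HeqS. reflexivity.
        + intros z Hz Hz'. apply Hc. apply H1; auto. intros ->. apply Hz'. simpl; auto.
          intro. apply Hz'. simpl; auto.
      - intros L' HL' Hc. apply Hfail; auto. intros z Hz Hz'. apply Hc.
        apply H1; auto. intros ->. apply Hz'. simpl; auto. intro; apply Hz'; simpl; auto. }
    set (q := (1 - p) ^ length S) in *. nra.
Qed.

Open Scope R_scope.

Definition flatp (P : list (site * site)) : list site :=
  flat_map (fun pr => [fst pr; snd pr]) P.

Lemma reveal_pairs : forall p E, 0 <= p <= 1 -> Emono E -> forall P L acc X,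
  NoDup L -> NoDup (flatp P) -> incl (flatp P) L ->
  (forall P1 a c P2, P = P1 ++ (a, c) :: P2 -> forall L' acc', NoDup L' ->
     (forall z, In z L -> ~ In z (flatp P1 ++ [a; c]) -> In z L') ->
     (forall z, In z acc -> In z acc') -> In a acc' -> In c acc' -> X <= config_prob p E L' acc') ->
  (1 - (1 - p * p) ^ length P) * X <= config_prob p E L acc.
Proof.
  intros p E Hp HE P. induction P as [|[a c] P IH]; intros L acc X HL HP Hinc Hsucc.
  - simpl. replace ((1 - 1) * X) with 0 by ring. apply cp_bounds; auto.
  - simpl in HP |- *. unfold flatp in Hinc. simpl in Hinc.
    inversion HP as [|? ? Hna HP1]; subst. inversion HP1 as [|? ? Hnc HP2]; subst.
    assert (Ha : In a L) by (apply Hinc; simpl; auto).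
    destruct (extract a L Ha HL) as [L0 [HPm [Hn [H1 H2]]]].
    assert (Hc0 : In c L0). { apply H1. apply Hinc; simpl; auto. intros ->. apply Hna; simpl; auto. }
    destruct (extract c L0 Hc0 Hn) as [L1 [HPm1 [Hn1 [H3 H4]]]].
    rewrite (cp_perm p E Hp HE _ _ HPm). rewrite cp_cons.
    rewrite (cp_perm p E Hp HE _ _ HPm1). rewrite cp_cons.
    assert (Hsub : forall z, In z L -> z <> a -> z <> c -> In z L1).
    { intros z Hz Ha' Hc'. apply H3; auto. }
    assert (Hrest : incl (flatp P) L1).
    { intros z Hz. apply Hsub. apply Hinc. simpl; auto.
      intros ->. apply Hna. simpl; auto. intros ->. apply Hnc. auto. }
    assert (HA : X <= config_prob p E L1 (c :: a :: acc)).
    { apply (Hsucc [] a c P eq_refl); auto.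
      - intros z Hz Hz'. apply Hsub; auto; intros ->; apply Hz'; simpl; auto.
      - simpl; auto.
      - simpl; auto.
      - simpl; auto. }
    assert (Hgen : forall acc0, (forall z, In z acc -> In z acc0) ->
       (1 - (1 - p * p) ^ length P) * X <= config_prob p E L1 acc0).
    { intros acc0 Hacc0. apply IH; auto.
      intros P1 a' c' P2 HeqP L' acc' HL' Hc Hacc Ha' Hc'.
      apply (Hsucc ((a, c) :: P1) a' c' P2); auto.
      - rewrite HeqP. reflexivity.
      - intros z Hz Hz'. apply Hc.
        + apply Hsub; auto; intros ->; apply Hz'; simpl; auto.
        + intro Hz2. apply Hz'. simpl. right. right. exact Hz2. }
    assert (HB := Hgen (a :: acc) ltac:(simpl; auto)).
    assert (HC0 := Hgen acc ltac:(auto)).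
    assert (HC : config_prob p E L1 acc <= config_prob p E L0 acc).
    { rewrite (cp_perm p E Hp HE _ _ HPm1). rewrite cp_cons.
      pose proof (cp_mono p E Hp HE L1 acc (c :: acc) ltac:(simpl; auto)). nra. }
    set (q := (1 - p * p) ^ length P) in *.
    assert (0 <= p * p) by nra. assert (0 <= p * (1 - p)) by nra. nra.
Qed.

Open Scope Z_scope.

Lemma cl3 : forall A x y u v w,
  In u nbhd -> In v nbhd -> In w nbhd -> u <> v -> u <> w -> v <> w ->
  closure A (x + fst u, y + snd u) -> closure A (x + fst v, y + snd v) ->
  closure A (x + fst w, y + snd w) -> closure A (x, y).
Proof.
  intros. apply (cl_step A (x, y) u v w); auto.
Qed.

Ltac nb := simpl; tauto.
Ltac neq := let H := fresh in intro H; injection H; intros; discriminate.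

Lemma fix_site : forall A x y x' y', x' = x -> y' = y -> closure A (x, y) -> closure A (x', y').
Proof. intros; subst; auto. Qed.

Lemma pat_L : forall A x y (o : site),
  In o [(0,-1); (0,1); (1,0); (2,0)] ->
  closure A (x - 1, y) -> closure A (x - 2, y) -> closure A (x + fst o, y + snd o) ->
  closure A (x, y).
Proof.
  intros A x y o Ho H1 H2 H3.
  assert (G : In o nbhd /\ o <> (-1,0) /\ o <> (-2,0)).
  { simpl in Ho; destruct Ho as [<-|[<-|[<-|[<-|[]]]]]; repeat split; try nb; neq. }
  destruct G as [G1 [G2 G3]].
  apply (cl3 A x y (-1,0) (-2,0) o); auto; try nb; try neq.
  - eapply fix_site; [| |exact H1]; simpl; lia.
  - eapply fix_site; [| |exact H2]; simpl; lia.
Qed.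

Lemma pat_R : forall A x y,
  closure A (x + 1, y) -> closure A (x + 2, y) -> closure A (x, y - 1) ->
  closure A (x, y).
Proof.
  intros A x y H1 H2 H3.
  apply (cl3 A x y (1,0) (2,0) (0,-1)); try nb; try neq.
  - eapply fix_site; [| |exact H1]; simpl; lia.
  - eapply fix_site; [| |exact H2]; simpl; lia.
  - eapply fix_site; [| |exact H3]; simpl; lia.
Qed.

Definition filled (A : site -> Prop) (b d : Z) : Prop :=
  forall x y, 0 <= x <= b -> 0 <= y <= d -> closure A (x, y).

Lemma col_fill : forall A b d y0, filled A b d -> 1 <= b -> 0 <= y0 <= d ->
  closure A (b + 1, y0) -> filled A (b + 1) d.
Proof.
  intros A b d y0 Hf Hb Hy0 Hc.
  assert (Up : forall k : nat, y0 + Z.of_nat k <= d -> closure A (b + 1, y0 + Z.of_nat k)).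
  { induction k; intros Hk.
    - eapply fix_site; [| |exact Hc]; lia.
    - apply (pat_L A _ _ (0,-1)); [simpl; tauto| | |].
      + apply Hf; lia.
      + apply Hf; lia.
      + eapply fix_site; [| |apply IHk]; simpl; lia. }
  assert (Dn : forall k : nat, 0 <= y0 - Z.of_nat k -> closure A (b + 1, y0 - Z.of_nat k)).
  { induction k; intros Hk.
    - eapply fix_site; [| |exact Hc]; lia.
    - apply (pat_L A _ _ (0,1)); [simpl; tauto| | |].
      + apply Hf; lia.
      + apply Hf; lia.
      + eapply fix_site; [| |apply IHk]; simpl; lia. }
  intros x y Hx Hy.
  destruct (Z.eq_dec x (b + 1)) as [->|Hne]; [|apply Hf; lia].
  destruct (Z_le_gt_dec y0 y).
  - eapply fix_site; [| |apply (Up (Z.to_nat (y - y0)))]; lia.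
  - eapply fix_site; [| |apply (Dn (Z.to_nat (y0 - y)))]; lia.
Qed.

Lemma row_fill : forall A b d x0, filled A b d -> 0 <= d -> 0 <= x0 -> x0 + 1 <= b ->
  closure A (x0, d + 1) -> closure A (x0 + 1, d + 1) -> filled A b (d + 1).
Proof.
  intros A b d x0 Hf Hd Hx0 Hxb C0 C1.
  assert (Rt : forall k : nat, x0 + 1 + Z.of_nat k <= b ->
     closure A (x0 + Z.of_nat k, d + 1) /\ closure A (x0 + 1 + Z.of_nat k, d + 1)).
  { induction k; intros Hk.
    - split; eapply fix_site; [| |exact C0| | |exact C1]; lia.
    - destruct IHk as [I1 I2]; [lia|]. split.
      + eapply fix_site; [| |exact I2]; lia.
      + apply (pat_L A _ _ (0,-1)); [simpl; tauto| | |].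
        * eapply fix_site; [| |exact I2]; lia.
        * eapply fix_site; [| |exact I1]; lia.
        * apply Hf; simpl; lia. }
  assert (Lt : forall k : nat, 0 <= x0 - Z.of_nat k ->
     closure A (x0 - Z.of_nat k, d + 1) /\ closure A (x0 - Z.of_nat k + 1, d + 1)).
  { induction k; intros Hk.
    - split; eapply fix_site; [| |exact C0| | |exact C1]; lia.
    - destruct IHk as [I1 I2]; [lia|]. split.
      + apply pat_R.
        * eapply fix_site; [| |exact I1]; lia.
        * eapply fix_site; [| |exact I2]; lia.
        * apply Hf; lia.
      + eapply fix_site; [| |exact I1]; lia. }
  intros x y Hx Hy.
  destruct (Z.eq_dec y (d + 1)) as [->|Hne]; [|apply Hf; lia].
  destruct (Z_le_gt_dec x0 x).
  - destruct (Z.eq_dec x x0) as [->|].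
    + exact C0.
    + eapply fix_site; [| |apply (proj2 (Rt (Z.to_nat (x - x0 - 1)) ltac:(lia)))]; lia.
  - eapply fix_site; [| |apply (proj1 (Lt (Z.to_nat (x0 - x)) ltac:(lia)))]; lia.
Qed.

Lemma hgeom : forall A b d e y0, filled A b d -> 1 <= b -> 0 <= e <= 2 -> 0 <= y0 <= d ->
  closure A (b + e + 1, y0) -> filled A (b + e + 1) d.
Proof.
  intros A b d e y0 Hf Hb He Hy0 Hc.
  assert (HE : e = 0 \/ e = 1 \/ e = 2) by lia.
  destruct HE as [HE|[HE|HE]]; subst e.
  - replace (b + 0 + 1) with (b + 1) in * by lia. eapply col_fill; eauto.
  - assert (C1 : closure A (b + 1, y0)).
    { apply (pat_L A _ _ (1,0)); [simpl; tauto| | |].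
      + apply Hf; lia. + apply Hf; lia.
      + eapply fix_site; [| |exact Hc]; simpl; lia. }
    assert (F1 := col_fill A b d y0 Hf Hb Hy0 C1).
    replace (b + 1 + 1) with ((b + 1) + 1) by lia.
    apply (col_fill A (b + 1) d y0 F1); [lia|lia|].
    eapply fix_site; [| |exact Hc]; lia.
  - assert (C1 : closure A (b + 1, y0)).
    { apply (pat_L A _ _ (2,0)); [simpl; tauto| | |].
      + apply Hf; lia. + apply Hf; lia.
      + eapply fix_site; [| |exact Hc]; simpl; lia. }
    assert (F1 := col_fill A b d y0 Hf Hb Hy0 C1).
    assert (C2 : closure A (b + 1 + 1, y0)).
    { apply (pat_L A _ _ (1,0)); [simpl; tauto| | |].
      + apply F1; lia. + apply F1; lia.
      + eapply fix_site; [| |exact Hc]; simpl; lia. }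
    assert (F2 := col_fill A (b + 1) d y0 F1 ltac:(lia) Hy0 C2).
    replace (b + 2 + 1) with ((b + 1 + 1) + 1) by lia.
    apply (col_fill A (b + 1 + 1) d y0 F2); [lia|lia|].
    eapply fix_site; [| |exact Hc]; lia.
Qed.

Open Scope R_scope.

Definition NN (p : R) : Z := Int_part (/ p ^ 5).
Definition ibox (N : Z) (z : site) : Prop := (0 <= fst z <= N)%Z /\ (0 <= snd z <= N)%Z.
Definition Ef (p : R) : (site -> Prop) -> Prop := fun K => internally_filled K (in_box p).
Definition Aacc (p : R) (acc : list site) : site -> Prop := fun w => In w acc /\ in_box p w.
Definition cpp (p : R) (L acc : list site) : R := config_prob p (Ef p) L acc.

Lemma Ef_mono : forall p, Emono (Ef p).
Proof.
  intros p K K' H HK z Hz. eapply closure_mono; [|apply HK; exact Hz].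
  intros w [H1 H2]; split; auto.
Qed.

Lemma in_box_iff : forall p z, 0 < p -> (in_box p z <-> ibox (NN p) z).
Proof.
  intros p [x y] Hp. unfold in_box, ibox, NN; simpl.
  destruct (base_Int_part (/ p ^ 5)) as [B1 B2].
  assert (Hgen : forall u : Z, (0 <= IZR u <= / p ^ 5 <-> (0 <= u <= Int_part (/ p ^ 5))%Z)).
  { intros u; split; intros [h1 h2]; split.
    - apply le_IZR; auto.
    - assert (IZR u < IZR (Int_part (/ p ^ 5) + 1)) by (rewrite plus_IZR; lra).
      apply lt_IZR in H. lia.
    - apply IZR_le; auto.
    - apply IZR_le in h2. lra. }
  rewrite (Hgen x), (Hgen y). tauto.
Qed.

Definition state' (p : R) (b d e : Z) (L acc : list site) : Prop :=
  NoDup L /\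
  (forall z, ibox (NN p) z -> ~ ((0 <= fst z <= b + e)%Z /\ (0 <= snd z <= d)%Z) -> In z L) /\
  filled (Aacc p acc) b d.

Lemma filled_mono : forall A A' b d, (forall z, A z -> A' z) -> filled A b d -> filled A' b d.
Proof. intros. intros x y Hx Hy. eapply closure_mono; eauto. Qed.

Fixpoint colsites (c : Z) (n : nat) : list site :=
  match n with O => [] | S k => (c, Z.of_nat k) :: colsites c k end.

Lemma colsites_in : forall c n z, In z (colsites c n) <-> (fst z = c /\ 0 <= snd z < Z.of_nat n)%Z.
Proof.
  intros c n; induction n; intros [x y]; simpl.
  - lia.
  - rewrite IHn. simpl. split.
    + intros [H|H]; [injection H; intros; subst; lia | lia].
    + intros [-> H]. destruct (Z.eq_dec y (Z.of_nat n)) as [->|]; [left; auto | right; lia].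
Qed.

Lemma colsites_nodup : forall c n, NoDup (colsites c n).
Proof.
  intros c n; induction n; simpl; constructor; auto.
  rewrite colsites_in. simpl. lia.
Qed.

Lemma colsites_len : forall c n, length (colsites c n) = n.
Proof. intros c n; induction n; simpl; auto. Qed.

Lemma in_app_split : forall (S S1 S2 : list site) s z, S = S1 ++ s :: S2 -> In z (S1 ++ [s]) -> In z S.
Proof. intros; subst. apply in_or_app. apply in_app_or in H0. simpl in *. tauto. Qed.

Lemma hcol : forall p b d e L acc X Y, 0 < p < 1 -> (1 <= b)%Z -> (0 <= e <= 2)%Z ->
  (b + e + 1 <= NN p)%Z -> (0 <= d <= NN p)%Z ->
  state' p b d e L acc ->
  (forall L' acc', state' p (b + e + 1) d 0 L' acc' -> X <= cpp p L' acc') ->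
  (forall L', state' p b d (e + 1) L' acc -> Y <= cpp p L' acc) ->
  (1 - (1 - p) ^ (S (Z.to_nat d))) * X + (1 - p) ^ (S (Z.to_nat d)) * Y <= cpp p L acc.
Proof.
  intros p b d e L acc X Y Hp Hb He HbN Hd [HL [Hout Hf]] HX HY.
  set (S0 := colsites (b + e + 1) (S (Z.to_nat d))).
  rewrite <- (colsites_len (b + e + 1) (S (Z.to_nat d))). fold S0.
  assert (HS : forall z, In z S0 <-> (fst z = b + e + 1 /\ 0 <= snd z <= d)%Z).
  { intros z. unfold S0. rewrite colsites_in. lia. }
  apply reveal_seq; auto.
  - lra.
  - apply Ef_mono.
  - apply colsites_nodup.
  - intros z Hz. apply HS in Hz. apply Hout; unfold ibox; lia.
  - intros S1 s S2 Heq L' acc' HL' Hc Hacc Hs.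
    assert (HsS : In s S0) by (rewrite Heq; apply in_or_app; simpl; auto).
    apply HX. split; [auto|split].
    + intros z Hz Hnr. apply Hc.
      * apply Hout; auto. intros Hr; apply Hnr; lia.
      * intros Hz'. apply (in_app_split _ _ _ _ _ Heq) in Hz'. apply HS in Hz'. lia.
    + destruct s as [sx sy]. apply HS in HsS. simpl in HsS. destruct HsS as [-> Hsy].
      apply (hgeom _ b d e sy); auto; try lia.
      * eapply filled_mono; [|exact Hf]. intros w [h1 h2]; split; auto.
      * apply cl_base. split; auto. apply in_box_iff; [lra|]. unfold ibox; cbn [fst snd]; lia.
  - intros L' HL' Hc. apply HY. split; [auto|split; auto].
    intros z Hz Hnr. apply Hc.
    + apply Hout; auto. intros Hr; apply Hnr; lia.
    + intros Hz'. apply HS in Hz'. lia.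
Qed.

Fixpoint pairs (y : Z) (n : nat) : list (site * site) :=
  match n with O => [] | S k => ((2 * Z.of_nat k, y), (2 * Z.of_nat k + 1, y))%Z :: pairs y k end.

Lemma flatp_cons : forall a c P, flatp ((a, c) :: P) = a :: c :: flatp P.
Proof. reflexivity. Qed.

Lemma pairs_S : forall y n, pairs y (S n) = ((2 * Z.of_nat n, y), (2 * Z.of_nat n + 1, y))%Z :: pairs y n.
Proof. reflexivity. Qed.

Lemma pairs_flat_in : forall y n z, In z (flatp (pairs y n)) <-> (snd z = y /\ 0 <= fst z < 2 * Z.of_nat n)%Z.
Proof.
  intros y n; induction n; intros [a b].
  - simpl. lia.
  - rewrite pairs_S, flatp_cons. split.
    + intros [H|[H|H]].
      * apply pair_equal_spec in H as [H1 H2]; subst; cbn [fst snd]; lia.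
      * apply pair_equal_spec in H as [H1 H2]; subst; cbn [fst snd]; lia.
      * apply IHn in H; cbn [fst snd] in *; lia.
    + intros [Hb Ha]; cbn [fst snd] in Hb, Ha.
      destruct (Z.eq_dec a (2 * Z.of_nat n)) as [->|]; [left; f_equal; lia|].
      destruct (Z.eq_dec a (2 * Z.of_nat n + 1)) as [->|]; [right; left; f_equal; lia|].
      right; right. apply IHn. cbn [fst snd]. lia.
Qed.

Lemma pairs_nodup : forall y n, NoDup (flatp (pairs y n)).
Proof.
  intros y n; induction n; [constructor|].
  rewrite pairs_S, flatp_cons. constructor.
  - intros [H|H]; [apply pair_equal_spec in H; lia|]. apply pairs_flat_in in H. cbn [fst snd] in H. lia.
  - constructor; auto. intros H. apply pairs_flat_in in H. cbn [fst snd] in H. lia.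
Qed.

Lemma pairs_in : forall y n a c, In (a, c) (pairs y n) ->
  exists i, (0 <= i /\ 2 * i + 1 < 2 * Z.of_nat n)%Z /\ a = (2 * i, y)%Z /\ c = (2 * i + 1, y)%Z.
Proof.
  intros y n; induction n; intros a c H; simpl in H; [contradiction|].
  destruct H as [H|H].
  - injection H; intros; subst. exists (Z.of_nat n). repeat split; lia.
  - destruct (IHn a c H) as [i [Hi R]]. exists i. split; [lia|auto].
Qed.

Lemma pairs_len : forall y n, length (pairs y n) = n.
Proof. intros y n; induction n; simpl; auto. Qed.

Lemma flatp_app : forall P1 P2, flatp (P1 ++ P2) = flatp P1 ++ flatp P2.
Proof. intros. unfold flatp. apply flat_map_app. Qed.

Lemma vstep : forall p b d K L acc X, 0 < p < 1 -> (0 <= d)%Z -> (d + 1 <= NN p)%Z ->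
  (b <= NN p)%Z -> (2 * Z.of_nat K <= b + 1)%Z ->
  state' p b d 0 L acc ->
  (forall L' acc', state' p b (d + 1) 0 L' acc' -> X <= cpp p L' acc') ->
  (1 - (1 - p * p) ^ K) * X <= cpp p L acc.
Proof.
  intros p b d K L acc X Hp Hd HdN HbN HK [HL [Hout Hf]] HX.
  rewrite <- (pairs_len (d + 1) K).
  apply reveal_pairs; auto.
  - lra.
  - apply Ef_mono.
  - apply pairs_nodup.
  - intros z Hz. apply pairs_flat_in in Hz. apply Hout; unfold ibox; lia.
  - intros P1 a c P2 Heq L' acc' HL' Hc Hacc Ha Hc'.
    assert (Hac : In (a, c) (pairs (d + 1) K)) by (rewrite Heq; apply in_or_app; simpl; auto).
    apply HX. split; [auto|split].
    + intros z Hz Hnr. apply Hc.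
      * apply Hout; auto. intros Hr; apply Hnr; lia.
      * intros Hz'. apply in_app_or in Hz'. destruct Hz' as [Hz'|Hz'].
        -- assert (In z (flatp (pairs (d + 1) K))).
           { rewrite Heq, flatp_app. apply in_or_app; auto. }
           apply pairs_flat_in in H. lia.
        -- destruct (pairs_in _ _ _ _ Hac) as [i [Hi [-> ->]]].
           cbn [In] in Hz'. destruct Hz' as [<-|[<-|[]]]; apply Hnr; cbn [fst snd]; lia.
    + destruct (pairs_in _ _ _ _ Hac) as [i [Hi [-> ->]]].
      apply (row_fill _ b d (2 * i)); try lia.
      * eapply filled_mono; [|exact Hf]. intros w [h1 h2]; split; auto.
      * apply cl_base. split; auto. apply in_box_iff; [lra|]. unfold ibox; cbn [fst snd]; lia.
      * apply cl_base. split; auto. apply in_box_iff; [lra|]. unfold ibox; cbn [fst snd]; lia.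
Qed.

Lemma hstep3 : forall p b d L acc X, 0 < p < 1 -> (1 <= b)%Z -> (b + 3 <= NN p)%Z ->
  (0 <= d <= NN p)%Z -> state' p b d 0 L acc ->
  (forall j L' acc', (1 <= j <= 3)%Z -> state' p (b + j) d 0 L' acc' -> X <= cpp p L' acc') ->
  (1 - ((1 - p) ^ (S (Z.to_nat d))) ^ 3) * X <= cpp p L acc.
Proof.
  intros p b d L acc X Hp Hb HbN Hd Hs HX.
  set (a := (1 - p) ^ (S (Z.to_nat d))).
  assert (H2 : forall L', state' p b d 2 L' acc -> (1 - a) * X + a * 0 <= cpp p L' acc).
  { intros L' Hs'. apply (hcol p b d 2); auto; try lia.
    - intros L'' acc'' HH; apply (HX 3%Z); [lia|]; replace (b + 3)%Z with (b + 2 + 1)%Z by lia; exact HH.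
    - intros. apply cp_bounds; lra. }
  assert (H1 : forall L', state' p b d 1 L' acc ->
     (1 - a) * X + a * ((1 - a) * X + a * 0) <= cpp p L' acc).
  { intros L' Hs'. apply (hcol p b d 1); auto; try lia.
    intros L'' acc'' HH; apply (HX 2%Z); [lia|]; replace (b + 2)%Z with (b + 1 + 1)%Z by lia; exact HH. }
  assert (H0 := hcol p b d 0 L acc X _ Hp Hb ltac:(lia) ltac:(lia) Hd Hs
                 ltac:(intros L'' acc'' HH; apply (HX 1%Z); [lia|]; replace (b + 1)%Z with (b + 0 + 1)%Z by lia; exact HH) H1).
  fold a in H0. replace (1 - a ^ 3) with (1 - a + a * (1 - a + a * (1 - a))) by ring.
  lra.
Qed.

Lemma hstep1 : forall p b d L acc X, 0 < p < 1 -> (1 <= b)%Z -> (b + 1 <= NN p)%Z ->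
  (0 <= d <= NN p)%Z -> state' p b d 0 L acc ->
  (forall L' acc', state' p (b + 1) d 0 L' acc' -> X <= cpp p L' acc') ->
  (1 - (1 - p) ^ (S (Z.to_nat d))) * X <= cpp p L acc.
Proof.
  intros p b d L acc X Hp Hb HbN Hd Hs HX.
  assert (H0 := hcol p b d 0 L acc X 0 Hp Hb ltac:(lia) ltac:(lia) Hd Hs
                 ltac:(intros L'' acc'' HH; apply HX; replace (b + 1)%Z with (b + 0 + 1)%Z by lia; exact HH) ltac:(intros; apply cp_bounds; lra)).
  lra.
Qed.

Open Scope R_scope.

Definition Good (p : R) (B d : Z) (X : R) : Prop :=
  forall b L acc, (B <= b <= NN p)%Z -> state' p b d 0 L acc -> X <= cpp p L acc.

Lemma Good_mono : forall p B d X X', Good p B d X -> X' <= X -> Good p B d X'.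
Proof. intros. intros b L acc Hb Hs. specialize (H b L acc Hb Hs). lra. Qed.

Lemma Good_final : forall p, 0 < p < 1 -> Good p (NN p) (NN p) 1.
Proof.
  intros p Hp b L acc Hb [HL [Hout Hf]].
  assert (b = NN p) by lia. subst b.
  unfold cpp; rewrite (cp_one p (Ef p)); [lra|lra|apply Ef_mono|].
  intros [x y] Hz. apply (in_box_iff p) in Hz; [|lra].
  destruct Hz as [H1 H2]. apply Hf; auto.
Qed.

Lemma vgood : forall p B d K X, 0 < p < 1 -> Good p B (d + 1) X -> (0 <= d)%Z ->
  (d + 1 <= NN p)%Z -> (2 * Z.of_nat K <= B + 1)%Z ->
  Good p B d ((1 - (1 - p * p) ^ K) * X).
Proof.
  intros p B d K X Hp HG Hd HdN HK b L acc Hb Hs.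
  apply (vstep p b d K L acc X); auto; try lia.
  intros L' acc' Hs'. apply (HG b); auto.
Qed.

Lemma vgood_multi : forall p B D K X, 0 < p < 1 -> Good p B D X ->
  (D <= NN p)%Z -> (2 * Z.of_nat K <= B + 1)%Z ->
  forall k : nat, (0 <= D - Z.of_nat k)%Z ->
  Good p B (D - Z.of_nat k) ((1 - (1 - p * p) ^ K) ^ k * X).
Proof.
  intros p B D K X Hp HG HD HK k. induction k; intros Hk.
  - simpl. replace (D - 0)%Z with D by lia. eapply Good_mono; [exact HG|lra].
  - replace ((1 - (1 - p * p) ^ K) ^ (S k) * X) with ((1 - (1 - p * p) ^ K) * ((1 - (1 - p * p) ^ K) ^ k * X)) by (simpl; ring).
    apply vgood; auto; try lia.
    replace (D - Z.of_nat (S k) + 1)%Z with (D - Z.of_nat k)%Z by lia.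
    apply IHk. lia.
Qed.

Lemma pow_le1 : forall r n, 0 <= r <= 1 -> 0 <= r ^ n <= 1.
Proof.
  intros r n Hr. induction n; simpl; [lra|]. split; nra.
Qed.

Lemma hgood3 : forall p B d X, 0 < p < 1 -> Good p B d X -> 0 <= X ->
  (B + 2 <= NN p)%Z -> (0 <= d <= NN p)%Z ->
  forall n B', (1 <= B')%Z -> (B <= B' + Z.of_nat n)%Z ->
  Good p B' d ((1 - ((1 - p) ^ (S (Z.to_nat d))) ^ 3) ^ n * X).
Proof.
  intros p B d X Hp HG HX HBN Hd n.
  set (r := 1 - ((1 - p) ^ (S (Z.to_nat d))) ^ 3).
  assert (Hr : 0 <= r <= 1).
  { unfold r. assert (H := pow_le1 (1 - p) (S (Z.to_nat d)) ltac:(lra)).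
    assert (H' := pow_le1 ((1 - p) ^ (S (Z.to_nat d))) 3 H). lra. }
  induction n; intros B' HB' HBn b L acc Hb Hs.
  - simpl. rewrite Rmult_1_l. apply (HG b); auto. lia.
  - destruct (Z_le_gt_dec B b).
    + assert (H1 := HG b L acc ltac:(lia) Hs). assert (H2 := pow_le1 r (S n) Hr). nra.
    + simpl. rewrite Rmult_assoc. apply (hstep3 p b d L acc); auto; try lia.
      intros j L' acc' Hj Hs'. apply (IHn (b + j)%Z ltac:(lia) ltac:(lia) (b + j)%Z L' acc' ltac:(lia) Hs').
Qed.

Lemma hgood1 : forall p B d X, 0 < p < 1 -> Good p B d X -> 0 <= X ->
  (B <= NN p)%Z -> (0 <= d <= NN p)%Z ->
  forall n B', (1 <= B')%Z -> (B <= B' + Z.of_nat n)%Z ->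
  Good p B' d ((1 - (1 - p) ^ (S (Z.to_nat d))) ^ n * X).
Proof.
  intros p B d X Hp HG HX HBN Hd n.
  set (r := 1 - (1 - p) ^ (S (Z.to_nat d))).
  assert (Hr : 0 <= r <= 1).
  { unfold r. assert (H := pow_le1 (1 - p) (S (Z.to_nat d)) ltac:(lra)). lra. }
  induction n; intros B' HB' HBn b L acc Hb Hs.
  - simpl. rewrite Rmult_1_l. apply (HG b); auto. lia.
  - destruct (Z_le_gt_dec B b).
    + assert (H1 := HG b L acc ltac:(lia) Hs). assert (H2 := pow_le1 r (S n) Hr). nra.
    + simpl. rewrite Rmult_assoc. apply (hstep1 p b d L acc); auto; try lia.
      intros L' acc' Hs'. apply (IHn (b + 1)%Z ltac:(lia) ltac:(lia) (b + 1)%Z L' acc' ltac:(lia) Hs').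
Qed.

Lemma NoDup_prod : forall (l l' : list Z), NoDup l -> NoDup l' -> NoDup (list_prod l l').
Proof.
  intros l l' H H'. induction H; simpl; [constructor|].
  apply NoDup_app; auto.
  - apply Injective_map_NoDup; auto. intros a b E. injection E; auto.
  - intros [u v] Hu Hv. apply in_map_iff in Hu. destruct Hu as [w [E _]]. injection E; intros; subst.
    apply in_prod_iff in Hv. tauto.
Qed.

Lemma NN_nonneg : forall p, 0 < p -> (0 <= NN p)%Z.
Proof.
  intros p Hp. unfold NN. destruct (base_Int_part (/ p ^ 5)) as [_ H].
  assert (0 < / p ^ 5) by (apply Rinv_0_lt_compat; apply pow_lt; auto).
  assert (-1 < IZR (Int_part (/ p ^ 5))) by lra.
  apply lt_IZR in H1. lia.
Qed.

Lemma box_list_in : forall p z, 0 < p -> (In z (box_list p) <-> ibox (NN p) z).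
Proof.
  intros p [x y] Hp. pose proof (NN_nonneg p Hp) as HN0. unfold box_list, ibox, NN. cbv beta zeta. cbn [fst snd].
  set (N := Int_part (/ p ^ 5)).
  assert (Hc : forall u, In u (map Z.of_nat (seq 0 (S (Z.to_nat N)))) <-> (0 <= u <= N)%Z).
  { intros u. rewrite in_map_iff. split.
    - intros [k [<- Hk]]. apply in_seq in Hk.
      unfold NN in HN0. lia.
    - intros Hu. exists (Z.to_nat u). split; [lia|]. apply in_seq. lia. }
  split; intros H.
  - apply in_prod_iff in H. rewrite !Hc in H. exact H.
  - apply in_prod_iff. rewrite !Hc. exact H.
Qed.

Lemma box_list_nodup : forall p, NoDup (box_list p).
Proof.
  intros p. unfold box_list. cbv beta zeta. apply NoDup_prod; apply Injective_map_NoDup;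
    try (intros a b E; lia); apply seq_NoDup.
Qed.

Lemma start : forall p X, 0 < p < 1 -> (1 <= NN p)%Z -> Good p 1 0 X ->
  p * p * X <= prob_box_filled p.
Proof.
  intros p X Hp HN HG.
  change (prob_box_filled p) with (cpp p (box_list p) []).
  assert (H00 : In (0%Z, 0%Z) (box_list p)) by (apply box_list_in; [lra|]; unfold ibox; simpl; pose proof (NN_nonneg p ltac:(lra)); lia).
  destruct (extract _ _ H00 (box_list_nodup p)) as [L0 [HP0 [Hn0 [A0 B0]]]].
  assert (H10 : In (1%Z, 0%Z) L0).
  { apply A0. apply box_list_in; [lra|]; unfold ibox; simpl; lia. intro E; injection E; lia. }
  destruct (extract _ _ H10 Hn0) as [L1 [HP1 [Hn1 [A1 B1]]]].
  unfold cpp. rewrite (cp_perm p (Ef p) ltac:(lra) (Ef_mono p) _ _ HP0), cp_cons.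
  rewrite (cp_perm p (Ef p) ltac:(lra) (Ef_mono p) _ _ HP1), cp_cons.
  assert (HX : X <= cpp p L1 [(1%Z, 0%Z); (0%Z, 0%Z)]).
  { apply (HG 1%Z); [lia|]. split; [auto|split].
    - intros z Hz Hr. apply A1; [apply A0|].
      + apply box_list_in; auto; lra.
      + intros ->. apply Hr. simpl. lia.
      + intros ->. apply Hr. simpl. lia.
    - intros x y Hx Hy. apply cl_base. split.
      + assert (x = 0 \/ x = 1)%Z as [->| ->] by lia; assert (y = 0)%Z as -> by lia; simpl; auto.
      + apply in_box_iff; [lra|]. unfold ibox; simpl; lia. }
  unfold cpp in HX.
  assert (B1' := cp_bounds p (Ef p) L1 [(0%Z, 0%Z)] ltac:(lra)).
  assert (B2' := cp_bounds p (Ef p) L0 [] ltac:(lra)).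
  match goal with |- context [p * config_prob _ _ L1 ?a + (1 - p) * config_prob _ _ L1 ?b] =>
    change (config_prob p (Ef p) L1 a) with (config_prob p (Ef p) L1 [(1%Z, 0%Z); (0%Z, 0%Z)]);
    change (config_prob p (Ef p) L1 b) with (config_prob p (Ef p) L1 [(0%Z, 0%Z)]) end.
  set (c1 := config_prob p (Ef p) L1 [(1%Z, 0%Z); (0%Z, 0%Z)]) in *.
  set (c2 := config_prob p (Ef p) L1 [(0%Z, 0%Z)]) in *.
  set (c3 := config_prob p (Ef p) L0 []) in *.
  assert (0 <= p * p * (c1 - X)) by (apply Rmult_le_pos; nra).
  assert (0 <= p * ((1 - p) * c2)) by (apply Rmult_le_pos; nra).
  assert (0 <= (1 - p) * c3) by nra.
  nra.
Qed.

Open Scope R_scope.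

Lemma exp_le_mono : forall x y, x <= y -> exp x <= exp y.
Proof. intros x y [H|H]; [left; apply exp_increasing; auto|subst; lra]. Qed.

Lemma exp_pow_INR : forall a n, exp a ^ n = exp (a * INR n).
Proof.
  intros a n; induction n; simpl.
  - rewrite Rmult_0_r, exp_0. reflexivity.
  - rewrite IHn. rewrite <- exp_plus. f_equal. destruct n; simpl; ring.
Qed.

Lemma exp_neg_le_inv : forall x, 0 <= x -> exp (- x) <= 1 / (1 + x).
Proof.
  intros x Hx. rewrite exp_Ropp. assert (H := exp_ineq1_le x).
  assert (0 < exp x) by apply exp_pos.
  unfold Rdiv. rewrite Rmult_1_l. apply Rinv_le_contravar; lra.
Qed.

Lemma one_minus_ge_exp : forall z, 0 <= z <= 1 / 2 -> exp (- (2 * z)) <= 1 - z.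
Proof.
  intros z Hz. rewrite exp_Ropp. assert (H := exp_ineq1_le (2 * z)).
  assert (0 < exp (2 * z)) by apply exp_pos.
  apply (Rmult_le_reg_r (exp (2 * z))); auto.
  rewrite Rinv_l by lra. nra.
Qed.

Lemma pow_one_minus_le : forall q n, q <= 1 -> (1 - q) ^ n <= exp (- (q * INR n)).
Proof.
  intros q n Hq. replace (- (q * INR n)) with ((- q) * INR n) by ring.
  rewrite <- exp_pow_INR. apply pow_incr. split; [lra|].
  assert (H := exp_ineq1_le (- q)). lra.
Qed.

Lemma pow_ge_exp : forall r c n, 0 <= c -> exp (- c) <= r -> exp (- (c * INR n)) <= r ^ n.
Proof.
  intros r c n Hc Hr. replace (- (c * INR n)) with ((- c) * INR n) by ring.
  rewrite <- exp_pow_INR. apply pow_incr. split; [left; apply exp_pos|auto].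
Qed.

Lemma exp3p_bound : forall x, 0 <= x <= 1 / 2 -> exp x <= 1 + 2 * x.
Proof.
  intros x Hx. assert (H := exp_ineq1_le (- x)). rewrite exp_Ropp in H.
  assert (0 < exp x) by apply exp_pos.
  assert (H1 : 1 - x <= / exp x) by lra.
  apply (Rmult_le_compat_r (exp x)) in H1; [|lra]. rewrite Rinv_l in H1 by lra.
  nra.
Qed.

Lemma ln2_lt_1 : ln 2 < 1.
Proof.
  rewrite <- (ln_exp 1). apply ln_increasing; [lra|]. assert (H := exp_ineq1 1). lra.
Qed.

Lemma exp2_le_9 : exp 2 <= 9.
Proof.
  replace 2 with (1 + 1) by ring. rewrite exp_plus. assert (H := exp_le_3).
  assert (0 < exp 1) by apply exp_pos. nra.
Qed.

Lemma exp_m1_le_half : exp (- (1)) <= 1 / 2.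
Proof. assert (H := exp_neg_le_inv 1 ltac:(lra)). lra. Qed.

Lemma ln_le_x : forall x, 0 < x -> ln x <= x.
Proof.
  intros x Hx. rewrite <- (exp_ln x) at 2 by auto. assert (H := exp_ineq1_le (ln x)). lra.
Qed.

Lemma INR_to_nat : forall z, (0 <= z)%Z -> INR (Z.to_nat z) = IZR z.
Proof. intros z Hz. rewrite INR_IZR_INZ. rewrite Z2Nat.id; auto. Qed.

Open Scope R_scope.

Definition ell (p : R) : R := ln (1 / p).
Definition h0 (p : R) : nat := Z.to_nat (up (1 / (3 * p))).
Definition Hn (p : R) : nat := Z.to_nat (Int_part (ell p / (3 * p))).
Definition Yh (p : R) (h : nat) : R := exp (3 * p * INR (Nat.max h (h0 p))) / p.
Definition Kh (p : R) (h : nat) : Z := up (Yh p h).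
Definition Bh (p : R) (h : nat) : Z := (2 * Kh p h)%Z.
Definition K3 (p : R) : Z := up (6 * ell p / (p * p)).
Definition W3 (p : R) : Z := (2 * K3 p)%Z.

Definition cond (p : R) : Prop := 0 < p <= 1 / 8 /\ 1 <= ell p.

Lemma exp_ell : forall p, 0 < p -> exp (ell p) = 1 / p.
Proof. intros. unfold ell. apply exp_ln. apply Rdiv_lt_0_compat; lra. Qed.

Lemma exp_mell : forall p, 0 < p -> exp (- ell p) = p.
Proof.
  intros. rewrite exp_Ropp, exp_ell; auto. field. lra.
Qed.

Lemma up_pos_bounds : forall r, 0 < r -> (1 <= up r)%Z /\ r <= INR (Z.to_nat (up r)) <= r + 1.
Proof.
  intros r Hr. destruct (archimed r) as [H1 H2].
  assert (0 < IZR (up r)) by lra. apply lt_IZR in H. 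
  rewrite INR_to_nat by lia. split; [lia|lra].
Qed.

Lemma h0_bounds : forall p, 0 < p -> 1 <= 3 * p * INR (h0 p) <= 1 + 3 * p.
Proof.
  intros p Hp. unfold h0.
  assert (Hr : 0 < 1 / (3 * p)) by (apply Rdiv_lt_0_compat; lra).
  destruct (up_pos_bounds _ Hr) as [_ [H1 H2]].
  split.
  - apply (Rmult_le_compat_l (3 * p)) in H1; [|lra].
    replace (3 * p * (1 / (3 * p))) with 1 in H1 by (field; lra). lra.
  - apply (Rmult_le_compat_l (3 * p)) in H2; [|lra].
    replace (3 * p * (1 / (3 * p) + 1)) with (1 + 3 * p) in H2 by (field; lra). lra.
Qed.

Lemma Int_part_pos_bounds : forall r, 0 <= r -> (0 <= Int_part r)%Z /\ r - 1 < INR (Z.to_nat (Int_part r)) <= r.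
Proof.
  intros r Hr. destruct (base_Int_part r) as [H1 H2].
  assert (-1 < IZR (Int_part r)) by lra. apply lt_IZR in H.
  rewrite INR_to_nat by lia. split; [lia|lra].
Qed.

Lemma Hn_bounds : forall p, cond p -> ell p / (3 * p) - 1 < INR (Hn p) <= ell p / (3 * p).
Proof.
  intros p [Hp Hl]. unfold Hn.
  assert (0 <= ell p / (3 * p)) by (apply Rmult_le_pos; [lra|left; apply Rinv_0_lt_compat; lra]).
  apply Int_part_pos_bounds in H. tauto.
Qed.

Lemma Hn_3p : forall p, cond p -> ell p - 3 * p < 3 * p * INR (Hn p) <= ell p.
Proof.
  intros p Hc. destruct (Hn_bounds p Hc) as [H1 H2]. destruct Hc as [Hp _].
  split.
  - apply (Rmult_lt_compat_l (3 * p)) in H1; [|lra].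
    replace (3 * p * (ell p / (3 * p) - 1)) with (ell p - 3 * p) in H1 by (field; lra). lra.
  - apply (Rmult_le_compat_l (3 * p)) in H2; [|lra].
    replace (3 * p * (ell p / (3 * p))) with (ell p) in H2 by (field; lra). lra.
Qed.

Lemma Yh_pos : forall p h, 0 < p -> 0 < Yh p h.
Proof. intros. unfold Yh. apply Rdiv_lt_0_compat; [apply exp_pos|lra]. Qed.

Lemma Kh_bounds : forall p h, 0 < p -> (1 <= Kh p h)%Z /\ Yh p h <= INR (Z.to_nat (Kh p h)) <= Yh p h + 1.
Proof. intros. apply up_pos_bounds. apply Yh_pos; auto. Qed.

Lemma Yh_le : forall p m, cond p -> (m <= Hn p)%nat -> Yh p m <= 9 / (p * p).
Proof.
  intros p m Hc Hm. pose proof (Hn_3p p Hc) as [_ HH]. destruct Hc as [Hp Hl].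
  pose proof (h0_bounds p ltac:(lra)) as [_ H0].
  assert (HI : INR (Nat.max m (h0 p)) <= INR m + INR (h0 p)).
  { rewrite <- plus_INR. apply le_INR. lia. }
  assert (Hm' : INR m <= INR (Hn p)) by (apply le_INR; auto).
  assert (3 * p * INR (Nat.max m (h0 p)) <= ell p + 2) by nra.
  unfold Yh. apply exp_le_mono in H. rewrite exp_plus, exp_ell in H by lra.
  assert (H9 := exp2_le_9). assert (0 < exp 2) by apply exp_pos.
  assert (exp (3 * p * INR (Nat.max m (h0 p))) <= 9 / p).
  { eapply Rle_trans; [exact H|]. unfold Rdiv. 
    assert (0 < / p) by (apply Rinv_0_lt_compat; lra). nra. }
  unfold Rdiv in *. rewrite Rinv_mult.
  assert (0 < / p) by (apply Rinv_0_lt_compat; lra). nra.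
Qed.

Lemma NN_bounds : forall p, 0 < p -> / p ^ 5 - 1 < IZR (NN p) <= / p ^ 5.
Proof.
  intros p Hp. unfold NN. destruct (base_Int_part (/ p ^ 5)). lra.
Qed.

Lemma q_facts : forall p, cond p ->
  let q := / p in 8 <= q /\ / p ^ 5 = q ^ 5 /\ ell p <= q /\ 1 / p = q /\ 1 / (p * p) = q * q.
Proof.
  intros p [Hp Hl] q. unfold q.
  assert (8 <= / p).
  { replace 8 with (/ (1 / 8)) by field. apply Rinv_le_contravar; lra. }
  split; [auto|split; [rewrite pow_inv; auto|split; [|split]]].
  - unfold ell. replace (1 / p) with (/ p) by (field; lra). apply ln_le_x. lra.
  - field; lra.
  - field; lra.
Qed.

Lemma size_Bh : forall p m, cond p -> (m <= Hn p)%nat -> (Bh p m + 2 <= NN p)%Z.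
Proof.
  intros p m Hc Hm. pose proof (Yh_le p m Hc Hm) as HY.
  pose proof (q_facts p Hc) as [Q1 [Q2 [_ [_ Q5]]]].
  destruct Hc as [Hp Hl].
  pose proof (Kh_bounds p m ltac:(lra)) as [HK1 [_ HK2]].
  rewrite INR_to_nat in HK2 by lia.
  pose proof (NN_bounds p ltac:(lra)) as [HN _].
  apply le_IZR. unfold Bh. rewrite plus_IZR, mult_IZR.
  replace (9 / (p * p)) with (9 * (1 / (p * p))) in HY by (field; lra). rewrite Q5 in HY.
  rewrite Q2 in HN. set (q := / p) in *.
  assert (q ^ 5 >= 512 * (q * q)).
  { replace (q ^ 5) with ((q * q) * (q * q * q)) by ring.
    assert (q * q * q >= 512) by nra. nra. }
  assert (q * q >= 64) by nra.
  lra.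
Qed.

Lemma size_W3 : forall p, cond p -> (W3 p + 2 <= NN p)%Z /\ (1 <= K3 p)%Z /\
  IZR (W3 p) <= 12 * ell p / (p * p) + 2.
Proof.
  intros p Hc. pose proof (q_facts p Hc) as [Q1 [Q2 [Q3 [_ Q5]]]].
  destruct Hc as [Hp Hl].
  assert (Hr : 0 < 6 * ell p / (p * p)) by (apply Rdiv_lt_0_compat; nra).
  pose proof (up_pos_bounds _ Hr) as [HK1 [_ HK2]]. fold (K3 p) in HK1, HK2.
  rewrite INR_to_nat in HK2 by lia.
  pose proof (NN_bounds p ltac:(lra)) as [HN _].
  replace (6 * ell p / (p * p)) with (6 * ell p * (1 / (p * p))) in HK2 by (field; lra).
  rewrite Q5 in HK2. rewrite Q2 in HN. set (q := / p) in *.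
  assert (IZR (W3 p) <= 12 * ell p * (q * q) + 2).
  { unfold W3. rewrite mult_IZR. lra. }
  split; [|split; [lia|]].
  - apply le_IZR. rewrite plus_IZR.
    assert (q ^ 5 >= 64 * (q * q * q)).
    { replace (q ^ 5) with ((q * q) * (q * q * q)) by ring.
      assert (H64 : q * q >= 64) by nra.
      assert (H0 : q * q * q >= 0) by (apply Rle_ge; repeat apply Rmult_le_pos; lra). nra. }
    assert (ell p * (q * q) <= q * (q * q)) by (apply Rmult_le_compat_r; nra).
    assert (q * q * q >= 512) by nra.
    lra.
  - replace (12 * ell p / (p * p)) with (12 * ell p * (1 / (p * p))) by (field; lra).
    rewrite Q5. lra.
Qed.

Lemma size_Hn : forall p, cond p -> (Z.of_nat (Hn p) + 1 <= NN p)%Z.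
Proof.
  intros p Hc. pose proof (q_facts p Hc) as [Q1 [Q2 [Q3 [Q4 Q5]]]].
  pose proof (Hn_bounds p Hc) as [_ H].
  destruct Hc as [Hp Hl].
  pose proof (NN_bounds p ltac:(lra)) as [HN _].
  apply le_IZR. rewrite plus_IZR, <- INR_IZR_INZ.
  replace (ell p / (3 * p)) with (ell p * (1 / p) / 3) in H by (field; lra).
  rewrite Q4 in H. rewrite Q2 in HN. set (q := / p) in *.
  assert (q ^ 5 >= 512 * (q * q)).
  { replace (q ^ 5) with ((q * q) * (q * q * q)) by ring.
    assert (q * q * q >= 512) by nra. nra. }
  assert (ell p * q <= q * q) by (apply Rmult_le_compat_r; lra).
  assert (q * q >= 64) by nra. lra.
Qed.

Lemma vbound : forall p h, cond p -> (h < Hn p)%nat ->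
  exp (- (ell p + ln 2 - 3 * p * INR h)) <= 1 - (1 - p * p) ^ (Z.to_nat (Kh p h)).
Proof.
  intros p h Hc Hh. pose proof (Hn_3p p Hc) as [_ HH].
  destruct Hc as [Hp Hl] eqn:Hce.
  pose proof (Kh_bounds p h ltac:(lra)) as [_ [HK _]].
  set (K := Z.to_nat (Kh p h)) in *.
  assert (HY : exp (3 * p * INR h) / p <= Yh p h).
  { unfold Yh. unfold Rdiv. apply Rmult_le_compat_r; [left; apply Rinv_0_lt_compat; lra|].
    apply exp_le_mono. apply Rmult_le_compat_l; [lra|]. apply le_INR. lia. }
  set (y := p * exp (3 * p * INR h)).
  set (x := p * p * INR K).
  assert (Hxy : y <= x).
  { unfold x, y. assert (exp (3 * p * INR h) / p <= INR K) by lra.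
    apply (Rmult_le_compat_l (p * p)) in H; [|nra].
    replace (p * p * (exp (3 * p * INR h) / p)) with (p * exp (3 * p * INR h)) in H by (field; lra).
    lra. }
  assert (Hy0 : 0 < y) by (unfold y; apply Rmult_lt_0_compat; [lra|apply exp_pos]).
  assert (Hy1 : y <= 1).
  { unfold y. assert (INR h <= INR (Hn p)) by (apply le_INR; lia).
    assert (exp (3 * p * INR h) <= exp (ell p)) by (apply exp_le_mono; nra).
    rewrite exp_ell in H0 by lra.
    apply (Rmult_le_compat_l p) in H0; [|lra].
    replace (p * (1 / p)) with 1 in H0 by (field; lra). lra. }
  assert (Hpow : (1 - p * p) ^ K <= 1 / (1 + x)).
  { eapply Rle_trans; [apply pow_one_minus_le; nra|].
    replace (p * p * INR K) with x by reflexivity. apply exp_neg_le_inv. lra. }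
  assert (Hexp : exp (- (ell p + ln 2 - 3 * p * INR h)) = y / 2).
  { replace (- (ell p + ln 2 - 3 * p * INR h)) with (- ell p + (- ln 2 + 3 * p * INR h)) by ring.
    rewrite !exp_plus, exp_mell by lra. rewrite exp_Ropp, exp_ln by lra. unfold y. field. }
  rewrite Hexp.
  assert (y / 2 <= 1 - 1 / (1 + x)).
  { assert (0 < 1 + x) by lra.
    replace (1 - 1 / (1 + x)) with (x / (1 + x)) by (field; lra).
    apply (Rmult_le_reg_r (2 * (1 + x))); [lra|].
    replace (y / 2 * (2 * (1 + x))) with (y * (1 + x)) by (field; lra).
    replace (x / (1 + x) * (2 * (1 + x))) with (2 * x) by (field; lra).
    nra. }
  lra.
Qed.

Lemma exp_le1 : forall x, 0 <= x -> exp (- x) <= 1.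
Proof. intros. rewrite <- exp_0. apply exp_le_mono. lra. Qed.

Lemma cube_bound : forall p m, 0 < p < 1 ->
  ((1 - p) ^ m) ^ 3 <= exp (- (3 * p * INR m)).
Proof.
  intros p m Hp. eapply Rle_trans.
  - apply pow_incr. split; [apply pow_le; lra|]. apply pow_one_minus_le. lra.
  - rewrite exp_pow_INR. apply exp_le_mono. simpl. lra.
Qed.

Lemma hbound : forall p h, cond p -> (h < Hn p)%nat ->
  exp (- (28)) <= (1 - ((1 - p) ^ (S (Z.to_nat (Z.of_nat (S h))))) ^ 3) ^ (Z.to_nat (Bh p (S h) - Bh p h)).
Proof.
  intros p h Hc Hh. rewrite Nat2Z.id.
  destruct Hc as [Hp Hl] eqn:Hce.
  destruct (le_lt_dec (h0 p) h) as [Hh0|Hh0].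
  2:{ assert (Yh p (S h) = Yh p h).
      { unfold Yh. do 3 f_equal. f_equal. lia. }
      unfold Bh, Kh. rewrite H. replace (2 * up (Yh p h) - 2 * up (Yh p h))%Z with 0%Z by lia.
      simpl. apply exp_le1. lra. }
  set (w := exp (- (3 * p * INR (S (S h))))).
  assert (Hz : ((1 - p) ^ (S (S h))) ^ 3 <= w) by (apply cube_bound; lra).
  assert (Hz0 : 0 <= ((1 - p) ^ (S (S h))) ^ 3) by (apply pow_le; apply pow_le; lra).
  pose proof (h0_bounds p ltac:(lra)) as [H01 _].
  assert (Hw1 : w <= 1 / 2).
  { eapply Rle_trans; [|apply exp_m1_le_half]. apply exp_le_mono.
    assert (INR (h0 p) <= INR (S (S h))) by (apply le_INR; lia). nra. }
  assert (Hw0 : 0 < w) by apply exp_pos.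
  set (n := Z.to_nat (Bh p (S h) - Bh p h)).
  assert (Hn12 : INR n <= 12 * exp (3 * p * INR h) + 2).
  { assert (HYS : Yh p (S h) = exp (3 * p * INR (S h)) / p).
    { unfold Yh. do 4 f_equal. lia. }
    assert (HY : Yh p h = exp (3 * p * INR h) / p).
    { unfold Yh. do 4 f_equal. lia. }
    pose proof (Kh_bounds p h ltac:(lra)) as [Ka [Kb _]].
    pose proof (Kh_bounds p (S h) ltac:(lra)) as [Kc [_ Kd]].
    rewrite INR_to_nat in Kb, Kd by lia.
    assert (He : exp (3 * p * INR (S h)) = exp (3 * p * INR h) * exp (3 * p)).
    { rewrite <- exp_plus. f_equal. rewrite S_INR. ring. }
    assert (H3 := exp3p_bound (3 * p) ltac:(lra)).
    assert (0 < exp (3 * p * INR h)) by apply exp_pos.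
    assert (HD : IZR (Bh p (S h) - Bh p h) <= 12 * exp (3 * p * INR h) + 2).
    { unfold Bh. rewrite minus_IZR, !mult_IZR.
      rewrite HYS, He in Kd. rewrite HY in Kb.
      assert (exp (3 * p * INR h) * exp (3 * p) / p - exp (3 * p * INR h) / p
              <= 6 * exp (3 * p * INR h)).
      { replace (exp (3 * p * INR h) * exp (3 * p) / p - exp (3 * p * INR h) / p)
          with (exp (3 * p * INR h) * ((exp (3 * p) - 1) / p)) by (field; lra).
        rewrite (Rmult_comm 6). apply Rmult_le_compat_l; [lra|].
        apply (Rmult_le_reg_r p); [lra|]. unfold Rdiv. rewrite Rmult_assoc, Rinv_l by lra. lra. }
      lra. }
    unfold n. destruct (Z_le_gt_dec (Bh p (S h) - Bh p h) 0).
    - replace (Z.to_nat (Bh p (S h) - Bh p h)) with 0%nat by lia. simpl. lra.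
    - rewrite INR_to_nat by lia. lra. }
  assert (Hr : exp (- (2 * w)) <= 1 - ((1 - p) ^ (S (S h))) ^ 3).
  { eapply Rle_trans; [apply one_minus_ge_exp; lra|lra]. }
  eapply Rle_trans; [|apply (pow_ge_exp _ (2 * w)); [lra|exact Hr]].
  apply exp_le_mono.
  assert (Hwe : w * exp (3 * p * INR h) <= 1).
  { unfold w. rewrite <- exp_plus. rewrite <- exp_0. apply exp_le_mono.
    rewrite !S_INR. nra. }
  assert (0 <= INR n) by apply pos_INR.
  assert (w * INR n <= w * (12 * exp (3 * p * INR h) + 2)) by (apply Rmult_le_compat_l; lra).
  nra.
Qed.

Definition F (p : R) (h : nat) : R :=
  (INR (Hn p) - INR h) * (ell p + ln 2 + 28)
  - (3 * p / 2) * (INR (Hn p) * (INR (Hn p) - 1) - INR h * (INR h - 1)).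

Lemma phase2_step : forall p h X, cond p -> (h < Hn p)%nat -> 0 <= X ->
  Good p (Bh p (S h)) (Z.of_nat (S h)) X ->
  Good p (Bh p h) (Z.of_nat h) (exp (- (ell p + ln 2 - 3 * p * INR h + 28)) * X).
Proof.
  intros p h X Hc Hh HX HG.
  assert (Hp : 0 < p < 1) by (destruct Hc; lra).
  pose proof (size_Bh p (S h) Hc ltac:(lia)) as HS1.
  pose proof (size_Hn p Hc) as HS2.
  pose proof (Kh_bounds p h ltac:(lra)) as [HK1 _].
  set (n := Z.to_nat (Bh p (S h) - Bh p h)).
  assert (G1 := hgood3 p _ _ X Hp HG HX HS1 ltac:(lia) n (Bh p h) ltac:(unfold Bh; lia) ltac:(unfold n; lia)).
  replace (Z.of_nat (S h)) with (Z.of_nat h + 1)%Z in G1 by lia.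
  assert (G2 := vgood p (Bh p h) (Z.of_nat h) (Z.to_nat (Kh p h)) _ Hp G1 ltac:(lia) ltac:(lia)
                  ltac:(unfold Bh; lia)).
  eapply Good_mono; [exact G2|].
  pose proof (vbound p h Hc Hh) as V.
  pose proof (hbound p h Hc Hh) as Hb. rewrite Nat2Z.id in Hb. fold n in Hb.
  replace (Z.to_nat (Z.of_nat h + 1)) with (S h) by lia.
  replace (- (ell p + ln 2 - 3 * p * INR h + 28)) with (- (ell p + ln 2 - 3 * p * INR h) + - (28)) by ring.
  rewrite exp_plus.
  set (v := 1 - (1 - p * p) ^ Z.to_nat (Kh p h)) in *.
  set (r := (1 - ((1 - p) ^ S (S h)) ^ 3) ^ n) in *.
  assert (0 < exp (- (ell p + ln 2 - 3 * p * INR h))) by apply exp_pos.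
  assert (0 < exp (- (28))) by apply exp_pos.
  assert (exp (- (ell p + ln 2 - 3 * p * INR h)) * exp (- (28)) <= v * r).
  { apply Rmult_le_compat; lra. }
  replace (v * (r * X)) with ((v * r) * X) by ring.
  apply Rmult_le_compat_r; auto.
Qed.

Lemma F_step : forall p h, F p h = (ell p + ln 2 - 3 * p * INR h + 28) + F p (S h).
Proof. intros. unfold F. rewrite S_INR. field. Qed.

Lemma phase2 : forall p X3, cond p -> 0 <= X3 ->
  Good p (Bh p (Hn p)) (Z.of_nat (Hn p)) X3 ->
  forall k, (k <= Hn p)%nat ->
  Good p (Bh p (Hn p - k)) (Z.of_nat (Hn p - k)) (exp (- (F p (Hn p - k))) * X3).
Proof.
  intros p X3 Hc HX HG k. induction k; intros Hk.
  - rewrite Nat.sub_0_r. unfold F. replace (INR (Hn p) - INR (Hn p)) with 0 by ring.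
    eapply Good_mono; [exact HG|].
    replace (- (0 * (ell p + ln 2 + 28) - 3 * p / 2 * (INR (Hn p) * (INR (Hn p) - 1) - INR (Hn p) * (INR (Hn p) - 1)))) with 0 by field.
    rewrite exp_0. lra.
  - set (h := (Hn p - S k)%nat).
    assert (Eh : S h = (Hn p - k)%nat) by (unfold h; lia).
    assert (IH := IHk ltac:(lia)). rewrite <- Eh in IH.
    assert (G := phase2_step p h (exp (- F p (S h)) * X3) Hc ltac:(unfold h; lia)
                   ltac:(apply Rmult_le_pos; [left; apply exp_pos|auto]) IH).
    eapply Good_mono; [exact G|].
    rewrite (F_step p h). rewrite <- Rmult_assoc, <- exp_plus.
    right. f_equal. f_equal. field.
Qed.

Open Scope R_scope.

Definition nN p := Z.to_nat (NN p).
Definition kk p := Z.to_nat (NN p - Z.of_nat (Hn p)).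
Definition n3 p := Z.to_nat (W3 p).
Definition n0 p := Z.to_nat (Bh p 0).

Definition r1 p := 1 - (1 - p) ^ S (Z.to_nat (NN p)).
Definition v3 p := 1 - (1 - p * p) ^ Z.to_nat (K3 p).
Definition r3 p := 1 - ((1 - p) ^ S (Z.to_nat (Z.of_nat (Hn p)))) ^ 3.
Definition r0 p := 1 - ((1 - p) ^ S (Z.to_nat 0)) ^ 3.

Lemma chain : forall p, cond p ->
  p * p * (r0 p ^ n0 p * (exp (- F p 0) * (r3 p ^ n3 p * (v3 p ^ kk p * (r1 p ^ nN p * 1)))))
  <= prob_box_filled p.
Proof.
  intros p Hc.
  assert (Hp : 0 < p < 1) by (destruct Hc; lra).
  pose proof (size_Hn p Hc) as SH.
  pose proof (size_W3 p Hc) as [SW1 [SW2 _]].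
  pose proof (size_Bh p 0 Hc ltac:(lia)) as SB0.
  pose proof (size_Bh p (Hn p) Hc ltac:(lia)) as SBH.
  pose proof (Kh_bounds p 0 ltac:(lra)) as [HK0 _].
  pose proof (Kh_bounds p (Hn p) ltac:(lra)) as [HKH _].
  assert (Hpow : forall r n, 0 <= r <= 1 -> 0 <= r ^ n) by (intros r n Hr; apply pow_le; lra).
  assert (R1 : 0 <= r1 p <= 1) by (unfold r1; pose proof (pow_le1 (1 - p) (S (Z.to_nat (NN p))) ltac:(lra)); lra).
  assert (V3 : 0 <= v3 p <= 1) by (unfold v3; pose proof (pow_le1 (1 - p * p) (Z.to_nat (K3 p)) ltac:(nra)); lra).
  assert (G5 := Good_final p Hp).
  assert (G4 := hgood1 p (NN p) (NN p) 1 Hp G5).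
  specialize (G4 ltac:(lra)). specialize (G4 ltac:(lia)). specialize (G4 ltac:(lia)).
  specialize (G4 (nN p) (W3 p)). specialize (G4 ltac:(unfold W3; lia)).
  specialize (G4 ltac:(unfold nN, W3; lia)).
  fold (r1 p) in G4.
  assert (G3 := vgood_multi p (W3 p) (NN p) (Z.to_nat (K3 p)) _ Hp G4 ltac:(lia)
                  ltac:(unfold W3; lia) (kk p) ltac:(unfold kk; lia)).
  replace (NN p - Z.of_nat (kk p))%Z with (Z.of_nat (Hn p)) in G3 by (unfold kk; lia).
  fold (v3 p) in G3.
  assert (X0 : 0 <= v3 p ^ kk p * (r1 p ^ nN p * 1)).
  { apply Rmult_le_pos; [apply Hpow; auto|]. rewrite Rmult_1_r. apply Hpow; auto. }
  assert (G2 := hgood3 p (W3 p) (Z.of_nat (Hn p)) _ Hp G3 X0 SW1 ltac:(lia)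
                  (n3 p) (Bh p (Hn p)) ltac:(unfold Bh; lia) ltac:(unfold n3, Bh, W3; lia)).
  fold (r3 p) in G2.
  assert (R3 : 0 <= r3 p <= 1).
  { unfold r3. pose proof (pow_le1 (1 - p) (S (Z.to_nat (Z.of_nat (Hn p)))) ltac:(lra)) as Q.
    pose proof (pow_le1 _ 3 Q). lra. }
  assert (X1 : 0 <= r3 p ^ n3 p * (v3 p ^ kk p * (r1 p ^ nN p * 1))).
  { apply Rmult_le_pos; [apply Hpow; auto|auto]. }
  assert (G1 := phase2 p _ Hc X1 G2 (Hn p) ltac:(lia)).
  rewrite Nat.sub_diag in G1. simpl Z.of_nat in G1.
  assert (X2 : 0 <= exp (- F p 0) * (r3 p ^ n3 p * (v3 p ^ kk p * (r1 p ^ nN p * 1)))).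
  { apply Rmult_le_pos; [left; apply exp_pos|auto]. }
  assert (G0 := hgood3 p (Bh p 0) 0 _ Hp G1 X2 SB0 ltac:(lia)
                  (n0 p) 1 ltac:(lia) ltac:(unfold n0, Bh; lia)).
  fold (r0 p) in G0.
  apply start; auto. lia.
Qed.

Lemma small_pow : forall p n, 0 < p <= 1 / 8 -> 0 <= p ^ S n <= 1 / 2.
Proof.
  intros p n Hp. pose proof (pow_le1 p n ltac:(lra)). simpl. split; nra.
Qed.

Lemma r0_bound : forall p, cond p -> exp (- (ell p * INR (n0 p))) <= r0 p ^ n0 p.
Proof.
  intros p [Hp Hl]. apply pow_ge_exp; [lra|].
  rewrite exp_mell by lra. unfold r0. simpl.
  assert (0 <= (1 - p) * (1 - p) <= 1) by (split; nra). nra.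
Qed.

Lemma n0_bound : forall p, cond p -> INR (n0 p) <= 20 / p.
Proof.
  intros p Hc. pose proof (Kh_bounds p 0 ltac:(destruct Hc; lra)) as [HK [_ HK2]].
  pose proof (h0_bounds p ltac:(destruct Hc; lra)) as [_ H0].
  destruct Hc as [Hp Hl].
  rewrite INR_to_nat in HK2 by lia. unfold n0, Bh. rewrite INR_to_nat by lia. rewrite mult_IZR.
  assert (Yh p 0 <= 9 / p).
  { unfold Yh. replace (Nat.max 0 (h0 p)) with (h0 p) by lia.
    unfold Rdiv. apply Rmult_le_compat_r; [left; apply Rinv_0_lt_compat; lra|].
    eapply Rle_trans; [|apply exp2_le_9]. apply exp_le_mono. lra. }
  assert (1 <= 1 / p) by (apply (Rmult_le_reg_r p); [lra|]; field_simplify; lra).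
  assert (9 / p = 9 * (1 / p)) by (field; lra). assert (20 / p = 20 * (1 / p)) by (field; lra).
  lra.
Qed.

Lemma r3_bound : forall p, cond p -> exp (- (2 * p * INR (n3 p))) <= r3 p ^ n3 p.
Proof.
  intros p Hc. pose proof (Hn_3p p Hc) as [H1 _]. destruct Hc as [Hp Hl].
  apply pow_ge_exp; [lra|]. unfold r3. rewrite Nat2Z.id.
  eapply Rle_trans; [apply one_minus_ge_exp; lra|].
  assert (((1 - p) ^ S (Hn p)) ^ 3 <= p).
  { eapply Rle_trans; [apply cube_bound; lra|].
    apply Rle_trans with (exp (- ell p)); [|rewrite exp_mell; lra].
    apply exp_le_mono. rewrite S_INR. nra. }
  lra.
Qed.

Lemma v3_bound : forall p, cond p -> exp (- (2 * p ^ 6 * INR (kk p))) <= v3 p ^ kk p.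
Proof.
  intros p Hc. pose proof (size_W3 p Hc) as [_ [HK _]]. destruct Hc as [Hp Hl].
  assert (Hr : 0 < 6 * ell p / (p * p)) by (apply Rdiv_lt_0_compat; nra).
  pose proof (up_pos_bounds _ Hr) as [_ [HK2 _]]. fold (K3 p) in HK2.
  assert (H6 : 0 <= p ^ 6 <= 1 / 2) by (apply small_pow; lra).
  apply pow_ge_exp; [lra|]. unfold v3.
  eapply Rle_trans; [apply one_minus_ge_exp; exact H6|].
  assert ((1 - p * p) ^ Z.to_nat (K3 p) <= p ^ 6).
  { eapply Rle_trans; [apply pow_one_minus_le; nra|].
    replace (p ^ 6) with (exp (- ell p) ^ 6) by (rewrite exp_mell; [reflexivity|lra]).
    rewrite exp_pow_INR. apply exp_le_mono.
    apply (Rmult_le_compat_l (p * p)) in HK2; [|nra].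
    replace (p * p * (6 * ell p / (p * p))) with (6 * ell p) in HK2 by (field; lra).
    simpl INR. lra. }
  lra.
Qed.

Lemma r1_bound : forall p, cond p -> exp (- (2 * p ^ 4 * INR (nN p))) <= r1 p ^ nN p.
Proof.
  intros p Hc. pose proof (q_facts p Hc) as [Q1 [Q2 _]]. destruct Hc as [Hp Hl].
  pose proof (NN_bounds p ltac:(lra)) as [HN _].
  pose proof (NN_nonneg p ltac:(lra)) as HN0. assert (0 <= IZR (NN p)) by (apply IZR_le; lia).
  assert (H4 : 0 <= p ^ 4 <= 1 / 2) by (apply small_pow; lra).
  apply pow_ge_exp; [lra|]. unfold r1.
  eapply Rle_trans; [apply one_minus_ge_exp; exact H4|].
  assert ((1 - p) ^ S (Z.to_nat (NN p)) <= p ^ 4).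
  { eapply Rle_trans; [apply pow_one_minus_le; lra|].
    rewrite S_INR, INR_to_nat by lia.
    eapply Rle_trans; [apply exp_neg_le_inv; nra|].
    rewrite Q2 in HN. set (q := / p) in *.
    assert (p * (IZR (NN p) + 1) >= q ^ 4).
    { assert (p * q = 1) by (unfold q; field; lra).
      replace (q ^ 5) with (q * q ^ 4) in HN by ring.
      assert (0 < q ^ 4) by (apply pow_lt; lra). nra. }
    assert (p ^ 4 * q ^ 4 = 1) by (rewrite <- Rpow_mult_distr; unfold q; rewrite Rinv_r by lra; apply pow1).
    assert (0 < q ^ 4) by (apply pow_lt; lra).
    assert (0 < p ^ 4) by (apply pow_lt; lra).
    apply (Rmult_le_reg_r (1 + p * (IZR (NN p) + 1))); [nra|].
    unfold Rdiv. rewrite Rmult_1_l, Rinv_l by nra. nra. }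
  lra.
Qed.

Lemma F0_bound : forall p, cond p ->
  F p 0 <= ell p * ell p / (6 * p) + (ln 2 + 28) * ell p / (3 * p) + ell p / 2.
Proof.
  intros p Hc. pose proof (Hn_bounds p Hc) as [H1 H2]. destruct Hc as [Hp Hl].
  assert (HL2 : 0 < ln 2) by (rewrite <- ln_1; apply ln_increasing; lra).
  set (X := ell p / (3 * p)) in *.
  set (H := INR (Hn p)) in *.
  set (c := ell p + ln 2 + 28).
  assert (HX : 3 * p * X = ell p) by (unfold X; field; lra).
  assert (E0 : F p 0 = H * c - 3 * p / 2 * (H * (H - 1))).
  { unfold F, c, H. simpl INR. field. }
  assert (E1 : (X * c - 3 * p / 2 * (X * (X - 1))) - (H * c - 3 * p / 2 * (H * (H - 1)))
             = (X - H) * (c - 3 * p / 2 * (X + H - 1))) by field.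
  assert (S1 : 0 <= (X - H) * (c - 3 * p / 2 * (X + H - 1))).
  { apply Rmult_le_pos; [lra|]. unfold c.
    assert (3 * p / 2 * (X + H - 1) <= ell p) by nra. lra. }
  assert (E2 : X * c - 3 * p / 2 * (X * (X - 1))
             = ell p * ell p / (6 * p) + (ln 2 + 28) * ell p / (3 * p) + ell p / 2).
  { unfold X, c. field. lra. }
  lra.
Qed.

Lemma total_bound : forall p eps, cond p -> 0 < eps -> 70 <= eps * ell p ->
  2 * ell p + ell p * INR (n0 p) + F p 0 + 2 * p * INR (n3 p) + 2 * p ^ 6 * INR (kk p)
  + 2 * p ^ 4 * INR (nN p) <= (1 / 6 + eps) * (1 / p) * ell p ^ 2.
Proof.
  intros p eps Hc He Hel.
  pose proof (n0_bound p Hc) as B0.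
  pose proof (F0_bound p Hc) as BF.
  pose proof (size_W3 p Hc) as [_ [HK3 BW]].
  pose proof (q_facts p Hc) as [Q1 [Q2 [Q3 [Q4 Q5]]]].
  pose proof (size_Hn p Hc) as SH.
  destruct Hc as [Hp Hl].
  pose proof (NN_bounds p ltac:(lra)) as [_ HN].
  assert (Hn3 : INR (n3 p) = IZR (W3 p)) by (unfold n3, W3; apply INR_to_nat; lia).
  assert (Hnn : INR (nN p) = IZR (NN p)) by (unfold nN; apply INR_to_nat; lia).
  assert (Hkk : INR (kk p) <= IZR (NN p)).
  { unfold kk. rewrite INR_to_nat by lia. apply IZR_le. lia. }
  assert (HL2 : ln 2 < 1) by apply ln2_lt_1.
  rewrite Q2 in HN. set (q := / p) in *.
  assert (Hpq : p * q = 1) by (unfold q; field; lra).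
  replace (20 / p) with (20 * q) in B0 by (unfold q; field; lra).
  replace (12 * ell p / (p * p)) with (12 * ell p * (q * q)) in BW by (unfold q; field; lra).
  replace (ell p * ell p / (6 * p)) with (ell p * ell p * q / 6) in BF by (unfold q; field; lra).
  replace ((ln 2 + 28) * ell p / (3 * p)) with ((ln 2 + 28) * ell p * q / 3) in BF by (unfold q; field; lra).
  rewrite Q4.
  assert (T1 : ell p * INR (n0 p) <= 20 * ell p * q) by nra.
  assert (T2 : 2 * p * INR (n3 p) <= 24 * ell p * q + 4 * p).
  { rewrite Hn3. assert (2 * p * IZR (W3 p) <= 2 * p * (12 * ell p * (q * q) + 2)) by (apply Rmult_le_compat_l; lra).
    assert (p * (q * q) = q) by (rewrite <- Rmult_assoc, Hpq; ring). nra. }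
  assert (Hq5 : p ^ 5 * q ^ 5 = 1) by (rewrite <- Rpow_mult_distr, Hpq; apply pow1).
  assert (T3 : 2 * p ^ 6 * INR (kk p) <= 2 * p).
  { assert (0 < p ^ 6) by (apply pow_lt; lra).
    assert (HH : 2 * p ^ 6 * INR (kk p) <= 2 * p ^ 6 * q ^ 5) by (apply Rmult_le_compat_l; lra).
    replace (2 * p ^ 6 * q ^ 5) with (2 * p * (p ^ 5 * q ^ 5)) in HH by ring. rewrite Hq5 in HH. lra. }
  assert (T4 : 2 * p ^ 4 * INR (nN p) <= 2 * q).
  { assert (0 < p ^ 4) by (apply pow_lt; lra). rewrite Hnn.
    assert (HH : 2 * p ^ 4 * IZR (NN p) <= 2 * p ^ 4 * q ^ 5) by (apply Rmult_le_compat_l; lra).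
    replace (2 * p ^ 4 * q ^ 5) with (2 * q * (p * q) ^ 4) in HH by ring. rewrite Hpq, pow1 in HH. lra. }
  assert (Hlq : ell p <= ell p * q) by nra.
  assert (Hqq : q <= ell p * q) by nra.
  assert (Heq : eps * (q * ell p ^ 2) >= 70 * ell p * q).
  { replace (eps * (q * ell p ^ 2)) with ((eps * ell p) * (ell p * q)) by ring.
    assert (0 <= ell p * q) by nra. nra. }
  assert (T5 : (ln 2 + 28) * ell p * q / 3 <= 10 * (ell p * q)).
  { assert (0 <= ell p * q) by nra. assert (0 < ln 2) by (rewrite <- ln_1; apply ln_increasing; lra). nra. }
  assert (0 <= ell p * q) by nra.
  replace ((1 / 6 + eps) * q * ell p ^ 2) with (ell p * ell p * q / 6 + eps * (q * ell p ^ 2)) by (simpl; field).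
  lra.
Qed.

Lemma main_bound : forall p eps, cond p -> 0 < eps -> 70 <= eps * ell p ->
  exp (- ((1 / 6 + eps) * (1 / p) * ell p ^ 2)) <= prob_box_filled p.
Proof.
  intros p eps Hc He Hel.
  eapply Rle_trans; [|apply chain; auto].
  pose proof (total_bound p eps Hc He Hel) as T.
  pose proof (r0_bound p Hc) as A0. pose proof (r3_bound p Hc) as A3.
  pose proof (v3_bound p Hc) as A4. pose proof (r1_bound p Hc) as A5.
  assert (Hp : 0 < p) by (destruct Hc; lra).
  assert (Ep : exp (- ell p) = p) by (apply exp_mell; auto).
  eapply Rle_trans with
    (exp (- ell p) * exp (- ell p) * (exp (- (ell p * INR (n0 p))) * (exp (- F p 0) *
     (exp (- (2 * p * INR (n3 p))) * (exp (- (2 * p ^ 6 * INR (kk p))) *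
     (exp (- (2 * p ^ 4 * INR (nN p))) * 1)))))).
  - rewrite Rmult_1_r, <- !exp_plus. apply exp_le_mono. lra.
  - rewrite Ep. rewrite !Rmult_1_r.
    assert (P1 := exp_pos (- (ell p * INR (n0 p)))).
    assert (P2 := exp_pos (- F p 0)).
    assert (P3 := exp_pos (- (2 * p * INR (n3 p)))).
    assert (P4 := exp_pos (- (2 * p ^ 6 * INR (kk p)))).
    assert (P5 := exp_pos (- (2 * p ^ 4 * INR (nN p)))).
    apply Rmult_le_compat_l; [nra|].
    apply Rmult_le_compat; [lra| |auto|].
    + repeat apply Rmult_le_pos; lra.
    + apply Rmult_le_compat_l; [lra|].
      apply Rmult_le_compat; [lra|nra|auto|].
      apply Rmult_le_compat; [lra|lra|auto|auto].
Qed.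

Theorem proposition2 :
  forall eps : R, 0 < eps ->
  exists p0 : R, 0 < p0 /\
    forall p : R, 0 < p < p0 ->
      prob_box_filled p >=
      exp (- ((1 / 6 + eps) * (1 / p) * (ln (1 / p)) ^ 2)).
Proof.
  intros eps He.
  exists (Rmin (1 / 8) (exp (- (70 / eps + 1)))). split.
  - apply Rmin_glb_lt; [lra|apply exp_pos].
  - intros p [Hp Hp0].
    assert (H1 : p < 1 / 8) by (eapply Rlt_le_trans; [exact Hp0|apply Rmin_l]).
    assert (H2 : p < exp (- (70 / eps + 1))) by (eapply Rlt_le_trans; [exact Hp0|apply Rmin_r]).
    assert (Hl : 70 / eps + 1 < ell p).
    { unfold ell. apply ln_increasing in H2; [|auto]. rewrite ln_exp in H2.
      replace (1 / p) with (/ p) by (field; lra). rewrite ln_Rinv by auto. lra. }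
    assert (Hc : cond p).
    { split; [lra|]. assert (0 < 70 / eps) by (apply Rdiv_lt_0_compat; lra). lra. }
    assert (Hel : 70 <= eps * ell p).
    { assert (70 / eps * eps = 70) by (field; lra). nra. }
    apply Rle_ge. apply main_bound; auto.
Qed.
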